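(* For $r\in\{1,\dots,n\}$ let $f_r=[\psi_1,\psi_1^*]\cdots[\psi_r,\psi_r^*]\in\mathrm{Cl}_q(n,k)$, where $[A,B]=AB-BA$. Let $\phi_a$ denote either $\psi_a$ or $\psi_a^*$. Then: (i) if $a>r$, then $\phi_a f_r=f_r\phi_a$ and $\omega_a f_r = f_r\omega_a$; (ii) if $a\le r$, then $\phi_a f_r=-f_r\phi_a$; (iii) for any $r,s\le n$, $f_rf_s=f_sf_r$ and $f_r^2=1$.
   Context: Let $\mathbb{k}$ be a field of characteristic different from $2$, let $q\in\mathbb{k}^\times$, and let $n,k$ be positive integers. The quantum Clifford algebra $\mathrm{Cl}_q(n,k)$ is the unital associative $\mathbb{k}$-algebra generated by $\psi_a,\psi_a^*,\omega_a,\omega_a^{-1}$ for $a\in\{1,\dots,n\}$, subject to the relations (for all $a,b\in\{1,\dots,n\}$): $\omega_a\omega_b=\omega_b\omega_a$; $\omega_a\omega_a^{-1}=1$; $\omega_a\psi_b=q^{\delta_{ab}}\psi_b\omega_a$; $\omega_a\psi_b^*=q^{-\delta_{ab}}\psi_b^*\omega_a$; $\psi_a\psi_b+\psi_b\psi_a=0$; $\psi_a^*\psi_b^*+\psi_b^*\psi_a^*=0$; $\psi_a\psi_a^*+q^k\psi_a^*\psi_a=\omega_a^{-k}$; $\psi_a\psi_a^*+q^{-k}\psi_a^*\psi_a=\omega_a^{k}$; and $\psi_a\psi_b^*+\psi_b^*\psi_a=0$ if $a\neq b$. *)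

(* Defs.v *)
From HB Require Import structures.
From mathcomp Require Import all_boot all_order all_algebra.
Set Implicit Arguments. Unset Strict Implicit. Unset Printing Implicit Defensive.
Import GRing.Theory.
Local Open Scope ring_scope.

(* Generators of Cl_q(n,k) indexed by 'I_n (index a : 'I_n stands for a+1). *)
(* [Clq_rels q kk psi psis om omi] : the elements psi a, psis a (= psi_a^* ),
   om a (= omega_a), omi a (= omega_a^{-1}) of the K-algebra A satisfy all the
   defining relations of Cl_q(n,kk). *)
Definition Clq_rels (K : fieldType) (A : algType K) (n : nat) (q : K) (kk : nat)
  (psi psis om omi : 'I_n -> A) : Prop :=
  (forall a b, om a * om b = om b * om a) /\
      (forall a, om a * omi a = 1) /\
      (forall a b, om a * psi b = (if a == b then q else 1) *: (psi b * om a)) /\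
      (forall a b, om a * psis b = (if a == b then q^-1 else 1) *: (psis b * om a)) /\
      (forall a b, psi a * psi b + psi b * psi a = 0) /\
      (forall a b, psis a * psis b + psis b * psis a = 0) /\
      (forall a, psi a * psis a + q ^+ kk *: (psis a * psi a) = omi a ^+ kk) /\
      (forall a, psi a * psis a + q ^- kk *: (psis a * psi a) = om a ^+ kk) /\
      (forall a b, a != b -> psi a * psis b + psis b * psi a = 0).

Definition commr (R : ringType) (x y : R) := x * y - y * x.

Definition fr (R : ringType) (n : nat) (psi psis : 'I_n -> R) (r : nat) : R :=
  \prod_(i < n | (i < r)%N) commr (psi i) (psis i).

(* Main.v *)
Require Import Defs.
From HB Require Import structures.
From mathcomp Require Import all_boot all_order all_algebra.
Import GRing.Theory.
Local Open Scope ring_scope.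

Section Gen.
Variable R : ringType.

Lemma ac2 (z x y : R) : z*x = -(x*z) -> z*y = -(y*z) -> z*(x*y) = x*y*z.
Proof. by move=> Hx Hy; rewrite mulrA Hx mulNr -(mulrA x z y) Hy mulrN opprK mulrA. Qed.

Lemma c2l (z x y : R) : z*x = x*z -> z*y = y*z -> z*(x*y) = x*y*z.
Proof. by move=> Hx Hy; rewrite mulrA Hx -(mulrA x z y) Hy mulrA. Qed.

Lemma ac_comm (z x y : R) : z*x = -(x*z) -> z*y = -(y*z) ->
  z * commr x y = commr x y * z.
Proof. by move=> Hx Hy; rewrite /commr mulrBr mulrBl (ac2 _ _ _ Hx Hy) (ac2 _ _ _ Hy Hx). Qed.

Lemma c_comm (z x y : R) : z*x = x*z -> z*y = y*z ->
  z * commr x y = commr x y * z.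
Proof. by move=> Hx Hy; rewrite /commr mulrBr mulrBl (c2l _ _ _ Hx Hy) (c2l _ _ _ Hy Hx). Qed.

Lemma nil_l (z y : R) : z*z = 0 -> z * commr z y = - (commr z y * z).
Proof.
move=> Hz; rewrite /commr mulrBr mulrBl !mulrA Hz mul0r sub0r -(mulrA y z z) Hz.
by rewrite mulr0 subr0.
Qed.

Lemma nil_r (z y : R) : z*z = 0 -> z * commr y z = - (commr y z * z).
Proof.
move=> Hz; rewrite /commr mulrBr mulrBl !mulrA Hz mul0r subr0 -(mulrA y z z) Hz.
by rewrite mulr0 sub0r opprK.
Qed.

Lemma prod_comm (I : Type) (s : seq I) (P : pred I) (F : I -> R) (z : R) :
  (forall i, P i -> z * F i = F i * z) ->
  z * \prod_(i <- s | P i) F i = (\prod_(i <- s | P i) F i) * z.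
Proof.
move=> H; apply: (big_ind (fun y => z*y = y*z)) => [|x y Hx Hy|i Pi].
- by rewrite mulr1 mul1r.
- exact: c2l.
- exact: H.
Qed.

Lemma prod_sign (I : Type) (s : seq I) (P : pred I) (F : I -> R) (z : R) (e : pred I) :
  (forall i, P i -> z * F i = (-1)^+(e i) * (F i * z)) ->
  z * \prod_(i <- s | P i) F i = (-1)^+(count (predI P e) s) * ((\prod_(i <- s | P i) F i) * z).
Proof.
move=> H; elim: s => [|a s IH]; first by rewrite big_nil /= mulr1 !mul1r.
rewrite big_cons /=; case Pa: (P a) => /=; last by rewrite add0n.
set Q := \prod_(j <- s | P j) F j.
rewrite mulrA H // -(mulrA _ (F a * z) Q) -(mulrA (F a) z Q) IH.
rewrite (mulrA (F a)) (commr_sign (F a)) -(mulrA _ (F a)) mulrA -exprD.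
by rewrite (mulrA (F a) Q z).
Qed.

Lemma prod_inv (I : Type) (s : seq I) (P : pred I) (F : I -> R) :
  (forall i j, F i * F j = F j * F i) -> (forall i, F i * F i = 1) ->
  (\prod_(i <- s | P i) F i) ^+ 2 = 1.
Proof.
move=> HC H1; elim: s => [|a s IH]; first by rewrite big_nil expr1n.
rewrite big_cons; case: (P a) => //.
have HQ := @prod_comm I s P F (F a) (fun i _ => HC a i).
move: HQ IH; set Q := \prod_(j <- s | P j) F j => HQ IH.
rewrite expr2 -(mulrA (F a) Q) (mulrA Q (F a) Q) -HQ.
by rewrite -(mulrA (F a) Q Q) -expr2 IH mulr1 H1.
Qed.

Lemma prod_comm2 (I : Type) (s t : seq I) (P Q : pred I) (F : I -> R) :
  (forall i j, F i * F j = F j * F i) ->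
  (\prod_(i <- s | P i) F i) * (\prod_(i <- t | Q i) F i)
  = (\prod_(i <- t | Q i) F i) * (\prod_(i <- s | P i) F i).
Proof.
move=> HC; apply: prod_comm => i _; symmetry; apply: prod_comm => j _; exact: HC.
Qed.

End Gen.

Theorem proposition3p9 (K : fieldType) (hK2 : (2%:R : K) != 0) (q : K) (hq : q != 0)
  (n kk : nat) (hkk : (0 < kk)%N) (A : algType K) (psi psis om omi : 'I_n -> A) :
  Clq_rels q kk psi psis om omi ->
  (* (i) a > r  (1-based), i.e. r <= a (0-based index a) *)
  (forall (r : nat) (a : 'I_n), (1 <= r <= n)%N -> (r <= a)%N ->
     [/\ psi a * fr psi psis r = fr psi psis r * psi a,
         psis a * fr psi psis r = fr psi psis r * psis a
       & om a * fr psi psis r = fr psi psis r * om a]) /\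
  (* (ii) a <= r (1-based), i.e. a < r (0-based index a) *)
  (forall (r : nat) (a : 'I_n), (1 <= r <= n)%N -> (a < r)%N ->
     psi a * fr psi psis r = - (fr psi psis r * psi a) /\
     psis a * fr psi psis r = - (fr psi psis r * psis a)) /\
  (* (iii) *)
  (forall r s : nat, (1 <= r <= n)%N -> (1 <= s <= n)%N ->
     fr psi psis r * fr psi psis s = fr psi psis s * fr psi psis r /\
     fr psi psis r ^+ 2 = 1).
Proof.
move=> [Hoo [Hoi [Hop [Hops [Hpp [Hss [Hk1 [Hk2 Hps]]]]]]]].
have two0 : forall v : A, v + v = 0 -> v = 0.
  move=> v Hv; have : (2%:R : K) *: v = 0 by rewrite scaler_nat mulr2n.
  move/(congr1 (fun w => (2%:R:K)^-1 *: w)).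
  by rewrite scalerA mulVf // scale1r scaler0.
have pp : forall a, psi a * psi a = 0 by move=> a; apply: two0; apply: Hpp.
have ss : forall a, psis a * psis a = 0 by move=> a; apply: two0; apply: Hss.
have acpp : forall a b, psi a * psi b = -(psi b * psi a).
  by move=> a b; apply/eqP; rewrite -addr_eq0 Hpp.
have acss : forall a b, psis a * psis b = -(psis b * psis a).
  by move=> a b; apply/eqP; rewrite -addr_eq0 Hss.
have acps : forall a b, a != b -> psi a * psis b = -(psis b * psi a).
  by move=> a b ab; apply/eqP; rewrite -addr_eq0 Hps.
have acsp : forall a b, a != b -> psis a * psi b = -(psi b * psis a).
  by move=> a b ab; apply/eqP; rewrite -addr_eq0 addrC Hps // eq_sym.
have omp : forall a b, a != b -> om a * psi b = psi b * om a.
  by move=> a b ab; rewrite Hop (negbTE ab) scale1r.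
have oms : forall a b, a != b -> om a * psis b = psis b * om a.
  by move=> a b ab; rewrite Hops (negbTE ab) scale1r.
pose c i := commr (psi i) (psis i).
have psic : forall a b, a != b -> psi a * c b = c b * psi a.
  by move=> a b ab; apply: ac_comm; [apply: acpp | apply: acps].
have psisc : forall a b, a != b -> psis a * c b = c b * psis a.
  by move=> a b ab; apply: ac_comm; [apply: acsp | apply: acss].
have omc : forall a b, a != b -> om a * c b = c b * om a.
  by move=> a b ab; apply: c_comm; [apply: omp | apply: oms].
have cc : forall a b, c a * c b = c b * c a.
  move=> a b; case: (eqVneq a b) => [->//|ab].
  by apply: c_comm; symmetry; [apply: psic | apply: psisc]; rewrite eq_sym.
have omk : forall a m, om a ^+ m * omi a ^+ m = 1.
  move=> a; elim=> [|m IH]; first by rewrite !expr0 mulr1.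
  by rewrite exprSr exprS mulrA -(mulrA _ (om a)) Hoi mulr1.
have c1 : forall a, c a * c a = 1.
  move=> a; rewrite -(omk a kk) -Hk1 -Hk2.
  have xy : psi a * psis a * (psis a * psi a) = 0.
    by rewrite mulrA -(mulrA (psi a) (psis a) (psis a)) ss mulr0 mul0r.
  have yx : psis a * psi a * (psi a * psis a) = 0.
    by rewrite mulrA -(mulrA (psis a) (psi a) (psi a)) pp mulr0 mul0r.
  rewrite /c /commr mulrBr !mulrBl mulrDr !mulrDl xy yx !subr0 sub0r opprK.
  rewrite -!scalerAl -!scalerAr xy yx !scaler0 addr0 add0r scalerA.
  by rewrite mulrC -exprVn -exprMn mulfV // expr1n scale1r.
split; [|split].
- move=> r a _ ra.
  have Pa : forall i : 'I_n, (i < r)%N -> a != i.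
    by move=> i ir; apply/eqP => ai; move: ra; rewrite ai leqNgt ir.
  split; apply: prod_comm => i ir.
  + exact: (psic _ _ (Pa _ ir)).
  + exact: (psisc _ _ (Pa _ ir)).
  + exact: (omc _ _ (Pa _ ir)).
- move=> r a _ ar.
  have cnt : count (predI (fun i : 'I_n => (i < r)%N) (pred1 a)) (index_enum 'I_n) = 1%N.
    rewrite (eq_count (a2 := pred1 a)); last first.
      by move=> i /=; case: eqP => [->|]; rewrite ?ar ?andbF ?andbT.
    by rewrite count_uniq_mem ?index_enum_uniq // mem_index_enum.
  split.
  + rewrite /fr (@prod_sign _ _ _ _ _ _ (pred1 a)) ?cnt ?expr1 ?mulN1r // => i _ /=.
    case: (eqVneq i a) => [->|ia]; first by rewrite expr1 mulN1r nil_l.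
    by rewrite expr0 mul1r psic // eq_sym.
  + rewrite /fr (@prod_sign _ _ _ _ _ _ (pred1 a)) ?cnt ?expr1 ?mulN1r // => i _ /=.
    case: (eqVneq i a) => [->|ia]; first by rewrite expr1 mulN1r nil_r.
    by rewrite expr0 mul1r psisc // eq_sym.
- move=> r s _ _; split; first exact: prod_comm2.
  exact: prod_inv.
Qed.
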